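(* Consider the $Q\times2$ coin problem below with $Q\ge12$, and let $C_1=40$, $C_2=64$. For any algorithm $\mathrm{Alg}$, if \[ N_1\le T_1:=\frac{Q}{4C_1\lambda^2}\quad\text{and}\quad N_2\le T_2:=\frac{Q(\delta+\epsilon)}{4C_2\epsilon^2}, \] then there exists a set $J\subseteq[Q]$ with $|J|\ge\frac{Q}{6}$ such that $\mathbb P_j[\hat\theta=j]\le\frac12$ for all $j\in J$.
   Context: Coin problem: constants $\delta,\lambda,\epsilon\in(0,\frac14]$ and $2Q$ coins arranged in a $Q\times2$ table (rows $1,\dots,Q$, columns $1,2$), one coin per cell. There is an unknown special row $\theta\in[Q]$. In column 1 all coins are fair except the coin in row $\theta$, whose probability of heads is $\frac12+\lambda$. In column 2 all coins have probability of heads $\delta$ except the coin in row $\theta$, with probability of heads $\delta+\epsilon$. An algorithm sequentially chooses coins to flip, each choice possibly depending on all previous outcomes, performs a (possibly random, data-dependent) total of $\tau=N_1+N_2\le H$ flips for a fixed budget $H>0$, where $N_1$ and $N_2$ are the numbers of flips of coins in column 1 and column 2 respectively, and then outputs a prediction $\hat\theta\in[Q]$. For $j\in[Q]$, $\mathbb P_j$ denotes the probability measure induced by the algorithm and the coins when $\theta=j$. *)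

(* Defs.v *)
From mathcomp Require Import all_boot all_order all_algebra.
Set Implicit Arguments. Unset Strict Implicit. Unset Printing Implicit Defensive.
Import Order.TTheory GRing.Theory Num.Theory.
Local Open Scope ring_scope.

(* A coin of the Q x 2 table: (row, column) with column false = column 1,
   column true = column 2.  A step of an interaction history: (coin, outcome),
   outcome true = heads. *)
Definition coin (Q : nat) := ('I_Q * bool)%type.
Definition step (Q : nat) := (coin Q * bool)%type.

Section Coins.
Variables (R : realFieldType) (Q : nat) (delta lambda eps : R).

Definition coin_heads (theta : 'I_Q) (c : coin Q) : R :=
  if c.2 then (if c.1 == theta then delta + eps else delta)
  else (if c.1 == theta then 1 / 2 + lambda else 1 / 2).

Definition coin_prob (theta : 'I_Q) (c : coin Q) (o : bool) : R :=
  if o then coin_heads theta c else 1 - coin_heads theta c.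

(* A (behavioural) randomized algorithm:
   act h (Some c) = probability to flip coin c next after history h,
   act h None     = probability to stop after history h,
   pred h k       = probability to output k when stopping after history h. *)
Variables (act : seq (step Q) -> option (coin Q) -> R)
          (pred : seq (step Q) -> 'I_Q -> R).

Definition is_algorithm (H : nat) : Prop :=
  [/\ (forall h a, 0 <= act h a),
      (forall h, \sum_(a : option (coin Q)) act h a = 1),
      (forall h, (H <= size h)%N -> act h None = 1),
      (forall h k, 0 <= pred h k) &
      (forall h, \sum_(k : 'I_Q) pred h k = 1)].

(* probability, under theta, that the interaction starts with history h
   (given the already-performed prefix pre) *)
Fixpoint path_prob_from (theta : 'I_Q) (pre h : seq (step Q)) : R :=
  match h with
  | [::] => 1
  | s :: h' => act pre (Some s.1) * coin_prob theta s.1 s.2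
               * path_prob_from theta (rcons pre s) h'
  end.

Definition path_prob theta h := path_prob_from theta [::] h.

Definition stop_prob theta h := path_prob theta h * act h None.

Definition N1 (h : seq (step Q)) : nat := count (fun s : step Q => ~~ s.1.2) h.
Definition N2 (h : seq (step Q)) : nat := count (fun s : step Q => s.1.2) h.

Definition prob_output (H : nat) (theta k : 'I_Q) : R :=
  \sum_(n < H.+1) \sum_(t : n.-tuple (step Q)) stop_prob theta t * pred t k.

End Coins.

Definition C1 {R : realFieldType} : R := 40.
Definition C2 {R : realFieldType} : R := 64.

(* Main.v *)
Require Import Defs.
From mathcomp Require Import all_boot all_order all_algebra.
From mathcomp Require Import ring lra.
Import Order.TTheory GRing.Theory Num.Theory.
Local Open Scope ring_scope.
Lemma sum_option (R : nmodType) (T : finType) (F : option T -> R) :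
  \sum_(a : option T) F a = F None + \sum_(c : T) F (Some c).
Proof.
rewrite (bigD1 None) //=; congr (_ + _).
rewrite (reindex_omap Some id) => [|[c|]] //=.
by apply: eq_bigl => c; rewrite eqxx.
Qed.
Lemma sum_tupleS (R : nmodType) (T : finType) n (F : seq T -> R) :
  \sum_(t : n.+1.-tuple T) F t = \sum_(x : T) \sum_(t : n.-tuple T) F (x :: t).
Proof.
rewrite pair_big /=.
rewrite (reindex (fun p : T * n.-tuple T => [tuple of p.1 :: p.2])) /=.
  by [].
exists (fun t : n.+1.-tuple T => (thead t, [tuple of behead t])).
  by move=> [x t] _ /=; rewrite theadE; congr (_, _); apply: val_inj.
by move=> t _; rewrite [t in RHS]tuple_eta.
Qed.
Lemma sum_tuple0 (R : nmodType) (T : finType) (F : seq T -> R) :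
  \sum_(t : 0.-tuple T) F t = F [::].
Proof. by rewrite (big_pred1 [tuple]) // => t; symmetry; apply/eqP; apply: tuple0. Qed.
Lemma sum_tupleSr (R : nmodType) (T : finType) n (F : seq T -> R) :
  \sum_(t : n.+1.-tuple T) F t = \sum_(t : n.-tuple T) \sum_(x : T) F (rcons t x).
Proof.
elim: n F => [|n IH] F.
  rewrite sum_tupleS (sum_tuple0 _ _ (fun t => \sum_x F (rcons t x))).
  by apply: eq_bigr => x _; rewrite (sum_tuple0 _ _ (fun t => F (x :: t))).
rewrite sum_tupleS.
under eq_bigr => x _ do rewrite (IH (fun t => F (x :: t))).
by rewrite (sum_tupleS _ _ _ (fun t => \sum_y F (rcons t y))).
Qed.

Definition gg {R : realFieldType} (a b : R) : R := (a - b) ^+ 2 / (a + b).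

Section GG.
Variable R : realFieldType.
Implicit Types a b : R.

Lemma gg_ge0 a b : 0 <= a -> 0 <= b -> 0 <= gg a b.
Proof. by move=> ha hb; rewrite /gg divr_ge0 ?sqr_ge0 ?addr_ge0. Qed.

Lemma gg_hom k a b : 0 <= k -> gg (k * a) (k * b) = k * gg a b.
Proof.
move=> _; rewrite /gg; have [->|k0] := eqVneq k 0.
  by rewrite !mul0r subrr expr0n /= mul0r.
have kk : k ^+ 2 * k^-1 = k by rewrite expr2 mulfK.
by rewrite -mulrBr -mulrDr exprMn invfM mulrACA kk.
Qed.

Lemma gg0l b : gg 0 b = b.
Proof.
rewrite /gg sub0r sqrrN add0r; have [->|b0] := eqVneq b 0; first by rewrite expr0n /= mul0r.
by rewrite expr2 mulfK.
Qed.

Lemma gg0r a : gg a 0 = a.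
Proof.
rewrite /gg subr0 addr0; have [->|a0] := eqVneq a 0; first by rewrite expr0n /= mul0r.
by rewrite expr2 mulfK.
Qed.

Lemma gg_key a b q r dd : 0 <= a -> 0 <= b -> 0 < q < 1 -> 0 < r < 1 -> 0 <= dd ->
  (0 < a -> 0 < b ->
     4 * a * b ^+ 2 * (q - r) ^+ 2 <= dd * (a + b) * (a * q + b * r) * (a * (1 - q) + b * (1 - r))) ->
  gg (a * q) (b * r) + gg (a * (1 - q)) (b * (1 - r)) <= gg a b + a * dd.
Proof.
move=> ha hb /andP[q0 q1] /andP[r0 r1] hd hpoly.
have [->|a0] := eqVneq a 0.
  rewrite !mul0r !gg0l addr0.
  by have -> : b * r + b * (1 - r) = b by ring.
have [->|b0] := eqVneq b 0.
  rewrite !mul0r !gg0r.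
  have -> : a * q + a * (1 - q) = a by ring.
  have := mulr_ge0 ha hd; lra.
have apos : 0 < a by rewrite lt_def a0.
have bpos : 0 < b by rewrite lt_def b0.
have hab : 0 < a + b by rewrite addr_gt0.
have h1 : 0 < a * q + b * r by rewrite addr_gt0 ?mulr_gt0.
have h2 : 0 < a * (1 - q) + b * (1 - r) by rewrite addr_gt0 ?mulr_gt0 ?subr_gt0.
have iden : gg (a * q) (b * r) + gg (a * (1 - q)) (b * (1 - r)) - gg a b =
   4 * a ^+ 2 * b ^+ 2 * (q - r) ^+ 2 / ((a + b) * (a * q + b * r) * (a * (1 - q) + b * (1 - r))).
  rewrite /gg; field.
  by rewrite (gt_eqF h1) (gt_eqF h2) (gt_eqF hab).
have den0 : 0 < (a + b) * (a * q + b * r) * (a * (1 - q) + b * (1 - r)) by rewrite !mulr_gt0.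
suff : 4 * a ^+ 2 * b ^+ 2 * (q - r) ^+ 2 / ((a + b) * (a * q + b * r) * (a * (1 - q) + b * (1 - r))) <= a * dd.
  by rewrite -iden; lra.
rewrite ler_pdivrMr //.
have := hpoly apos bpos => hp.
have -> : 4 * a ^+ 2 * b ^+ 2 * (q - r) ^+ 2 = a * (4 * a * b ^+ 2 * (q - r) ^+ 2) by ring.
have -> : a * dd * ((a + b) * (a * q + b * r) * (a * (1 - q) + b * (1 - r))) =
  a * (dd * (a + b) * (a * q + b * r) * (a * (1 - q) + b * (1 - r))) by ring.
by rewrite ler_wpM2l // ltW.
Qed.

Lemma tv_bound a b w : 0 <= a -> 0 <= b -> 0 <= w <= 1 ->
  2 * ((b - a) * w) <= 3 * gg a b + (a + b) * w / 3.
Proof.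
move=> ha hb /andP[w0 w1].
have gg0 : 0 <= gg a b by apply: gg_ge0.
have [e|ne] := eqVneq (a + b) 0.
  have a0 : a = 0 by lra.
  have b0 : b = 0 by lra.
  by rewrite a0 b0 gg0l subrr !mul0r mulr0; lra.
have hab : 0 < a + b by rewrite lt_def ne addr_ge0.
have key : 2 * (b - a) <= 3 * gg a b + (a + b) / 3.
  rewrite /gg.
  have : 0 <= (3 * (b - a) - (a + b)) ^+ 2 / (3 * (a + b)) by rewrite divr_ge0 ?sqr_ge0 // mulr_ge0 // ltW.
  have -> : (3 * (b - a) - (a + b)) ^+ 2 / (3 * (a + b)) =
    3 * ((a - b) ^+ 2 / (a + b)) + (a + b) / 3 - 2 * (b - a).
    by field; rewrite (gt_eqF hab).
  lra.
have : 2 * (b - a) * w <= (3 * gg a b + (a + b) / 3) * w by rewrite ler_wpM2r.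
have : 3 * gg a b * w <= 3 * gg a b.
  by rewrite -[X in _ <= X]mulr1 ler_wpM2l // mulr_ge0.
move=> h1 h2.
have -> : 2 * ((b - a) * w) = 2 * (b - a) * w by ring.
have -> : (a + b) * w / 3 = (a + b) / 3 * w by rewrite mulrAC.
lra.
Qed.
End GG.

Section Gen.
Variables (R : realFieldType) (Q H : nat) (act : seq (step Q) -> option (coin Q) -> R).
Hypotheses (act_ge0 : forall h a, 0 <= act h a)
  (act_sum : forall h, \sum_(a : option (coin Q)) act h a = 1)
  (act_stop : forall h, (H <= size h)%N -> act h None = 1).

Definition cp (q : coin Q -> R) (c : coin Q) (o : bool) : R := if o then q c else 1 - q c.
Fixpoint pp (q : coin Q -> R) (pre h : seq (step Q)) : R :=
  match h with
  | [::] => 1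
  | s :: h' => act pre (Some s.1) * cp q s.1 s.2 * pp q (rcons pre s) h'
  end.
Definition pr q h := pp q [::] h.
Definition stp q h := pr q h * act h None.
Definition Lv n (F : seq (step Q) -> R) := \sum_(t : n.-tuple (step Q)) F t.

Lemma pp_rcons q pre h s :
  pp q pre (rcons h s) = pp q pre h * act (pre ++ h) (Some s.1) * cp q s.1 s.2.
Proof.
elim: h pre => [|s' h IH] pre /=; first by rewrite cats0 mulr1 mul1r.
by rewrite IH cat_rcons !mulrA.
Qed.

Lemma pr_rcons q h s : pr q (rcons h s) = pr q h * act h (Some s.1) * cp q s.1 s.2.
Proof. by rewrite /pr pp_rcons. Qed.

Lemma act_sumS h : act h None + \sum_(c : coin Q) act h (Some c) = 1.
Proof. by rewrite -sum_option act_sum. Qed.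

Lemma act_some0 h c : (H <= size h)%N -> act h (Some c) = 0.
Proof.
move=> hs; have := act_sumS h; rewrite act_stop // => e.
have e0 : \sum_(c : coin Q) act h (Some c) = 0 by lra.
by apply: (psumr_eq0P (fun i _ => act_ge0 _ _) e0).
Qed.

Section Probs.
Variable q : coin Q -> R.
Hypothesis q01 : forall c, 0 <= q c <= 1.

Lemma cp_ge0 c o : 0 <= cp q c o.
Proof. by have := q01 c; case: o => /= /andP[]; lra. Qed.

Lemma cp_sum c : \sum_(o : bool) cp q c o = 1.
Proof. by rewrite big_bool /=; lra. Qed.

Lemma pp_ge0 pre h : 0 <= pp q pre h.
Proof.
elim: h pre => [|s h IH] pre /=; first exact: ler01.
by rewrite !mulr_ge0 ?cp_ge0.
Qed.

Lemma pr_ge0 h : 0 <= pr q h. Proof. exact: pp_ge0. Qed.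
Lemma stp_ge0 h : 0 <= stp q h. Proof. by rewrite mulr_ge0 ?pr_ge0. Qed.

Lemma sum_step (F : step Q -> R) : \sum_(s : step Q) F s = \sum_(c : coin Q) \sum_(o : bool) F (c, o).
Proof. by rewrite pair_big /=; apply: eq_bigr => -[]. Qed.

End Probs.

Section Pot.
Variables (q r d : coin Q -> R).
Hypotheses (q01 : forall c, 0 <= q c <= 1) (r01 : forall c, 0 <= r c <= 1).
Hypothesis key : forall c a b, 0 <= a -> 0 <= b ->
  gg (a * q c) (b * r c) + gg (a * (1 - q c)) (b * (1 - r c)) <= gg a b + a * d c.

Lemma pot_step h :
  \sum_(s : step Q) gg (pr q (rcons h s)) (pr r (rcons h s)) + gg (stp q h) (stp r h)
  <= gg (pr q h) (pr r h) + pr q h * \sum_(c : coin Q) (act h (Some c) * d c).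
Proof.
set P := pr q h; set Rr := pr r h; set s := act h None.
have hP : 0 <= P by apply: pr_ge0.
have hR : 0 <= Rr by apply: pr_ge0.
have hs : 0 <= s by apply: act_ge0.
rewrite sum_step.
have e1 : gg (stp q h) (stp r h) = s * gg P Rr.
  by rewrite /stp -/P -/Rr -/s [P * s]mulrC [Rr * s]mulrC gg_hom.
have e2 : forall c, \sum_(o : bool) gg (pr q (rcons h (c, o))) (pr r (rcons h (c, o)))
    <= act h (Some c) * (gg P Rr + P * d c).
  move=> c; rewrite big_bool /= !pr_rcons /= -/P -/Rr /cp /=.
  have ha : 0 <= act h (Some c) by apply: act_ge0.
  have hm : forall x y z w, gg (x * act h (Some c) * y) (z * act h (Some c) * w)
      = act h (Some c) * gg (x * y) (z * w).
    by move=> x y z w; rewrite -gg_hom //; congr gg; ring.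
  rewrite !hm -mulrDr ler_wpM2l //.
  exact: key.
apply: le_trans (lerD (ler_sum _ (fun c _ => e2 c)) (lexx _)) _.
rewrite e1.
have -> : \sum_(c : coin Q) act h (Some c) * (gg P Rr + P * d c) =
   (\sum_(c : coin Q) act h (Some c)) * gg P Rr + P * \sum_(c : coin Q) (act h (Some c) * d c).
  rewrite mulr_suml mulr_sumr -big_split /=; apply: eq_bigr => c _; ring.
have := act_sumS h; rewrite -/s => hsum.
have -> : \sum_(c : coin Q) act h (Some c) = 1 - s by lra.
have -> : (1 - s) * gg P Rr + P * \sum_(c : coin Q) (act h (Some c) * d c) + s * gg P Rr
   = gg P Rr + P * \sum_(c : coin Q) (act h (Some c) * d c) by ring.
by [].
Qed.

Lemma Lv0 F : Lv 0 F = F [::].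
Proof. exact: sum_tuple0. Qed.

Lemma LvS n F : Lv n.+1 F = Lv n (fun h => \sum_(s : step Q) F (rcons h s)).
Proof. exact: sum_tupleSr. Qed.

Lemma pot1 n :
  \sum_(m < n) Lv m (fun h => gg (stp q h) (stp r h)) + Lv n (fun h => gg (pr q h) (pr r h))
  <= \sum_(m < n) Lv m (fun h => pr q h * \sum_(c : coin Q) (act h (Some c) * d c)).
Proof.
elim: n => [|n IH].
  by rewrite !big_ord0 Lv0 /pr /= /gg subrr expr0n /= mul0r addr0.
rewrite !big_ord_recr /=.
have st : Lv n.+1 (fun h => gg (pr q h) (pr r h)) + Lv n (fun h => gg (stp q h) (stp r h))
   <= Lv n (fun h => gg (pr q h) (pr r h)) + Lv n (fun h => pr q h * \sum_(c : coin Q) (act h (Some c) * d c)).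
  rewrite LvS /Lv -!big_split /=; apply: ler_sum => t _; exact: pot_step.
lra.
Qed.
End Pot.

Section Pot2.
Variables (q d : coin Q -> R) (k : R).
Hypothesis q01 : forall c, 0 <= q c <= 1.
Definition DD (h : seq (step Q)) := k + \sum_(s <- h) d s.1.

Lemma pot2_step h :
  \sum_(s : step Q) pr q (rcons h s) * DD (rcons h s) + stp q h * DD h
  = pr q h * DD h + pr q h * \sum_(c : coin Q) (act h (Some c) * d c).
Proof.
set P := pr q h; set s := act h None.
rewrite sum_step.
have e2 : forall c, \sum_(o : bool) pr q (rcons h (c, o)) * DD (rcons h (c, o))
    = P * act h (Some c) * (DD h + d c).
  move=> c; rewrite big_bool /= !pr_rcons /= -/P /DD !big_rcons /= /cp /=; ring.
rewrite (eq_bigr _ (fun c _ => e2 c)).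
have -> : \sum_(c : coin Q) P * act h (Some c) * (DD h + d c) =
   P * (\sum_(c : coin Q) act h (Some c)) * DD h + P * \sum_(c : coin Q) (act h (Some c) * d c).
  rewrite !mulr_sumr mulr_suml -big_split /=; apply: eq_bigr => c _; ring.
have := act_sumS h; rewrite -/s => hsum.
have -> : \sum_(c : coin Q) act h (Some c) = 1 - s by lra.
rewrite /stp -/P -/s; ring.
Qed.

Lemma pot2 n :
  \sum_(m < n) Lv m (fun h => pr q h * \sum_(c : coin Q) (act h (Some c) * d c)) + k
  = \sum_(m < n) Lv m (fun h => stp q h * DD h) + Lv n (fun h => pr q h * DD h).
Proof.
elim: n => [|n IH].
  by rewrite !big_ord0 Lv0 /pr /DD /= big_nil addr0 mul1r add0r.
rewrite !big_ord_recr /=.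
have st : Lv n.+1 (fun h => pr q h * DD h) + Lv n (fun h => stp q h * DD h)
   = Lv n (fun h => pr q h * DD h) + Lv n (fun h => pr q h * \sum_(c : coin Q) (act h (Some c) * d c)).
  rewrite LvS /Lv -!big_split /=; apply: eq_bigr => t _; exact: pot2_step.
lra.
Qed.

Lemma Lv_end (G : seq (step Q) -> R) : Lv H.+1 (fun h => pr q h * G h) = 0.
Proof.
rewrite LvS /Lv; apply: big1 => t _; apply: big1 => s _.
by rewrite pr_rcons act_some0 ?size_tuple // mulr0 !mul0r.
Qed.
End Pot2.

Lemma pp_pos (q r : coin Q -> R) : (forall c, 0 <= q c <= 1) -> (forall c, 0 < r c < 1) ->
  forall pre h, 0 < pp q pre h -> 0 < pp r pre h.
Proof.
move=> q01 r01 pre h; elim: h pre => [|s h IH] pre //=.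
move=> hp.
have ha := act_ge0 pre (Some s.1).
have hc : 0 <= cp q s.1 s.2 by apply: cp_ge0.
have hpp : 0 <= pp q (rcons pre s) h by apply: pp_ge0.
have a0 : 0 < act pre (Some s.1).
  rewrite lt_def ha andbT; apply/eqP => e; move: hp; rewrite e !mul0r; lra.
have p0 : 0 < pp q (rcons pre s) h.
  rewrite lt_def hpp andbT; apply/eqP => e; move: hp; rewrite e !mulr0; lra.
have c0 : 0 < cp r s.1 s.2 by rewrite /cp; case: (s.2); have := r01 s.1; lra.
by rewrite !mulr_gt0 // IH.
Qed.
End Gen.
Lemma col1_poly (R : realFieldType) (a b l : R) : 0 < a -> 0 < b -> 0 < l -> l <= 1/4 ->
  4 * a * b ^+ 2 * (1/2 - (1/2 + l)) ^+ 2 <=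
  (16 * l ^+ 2 / 3) * (a + b) * (a * (1/2) + b * (1/2 + l)) * (a * (1 - 1/2) + b * (1 - (1/2 + l))).
Proof.
move=> ha hb hl hl4.
have eM : (a * (1/2) + b * (1/2 + l)) * (a * (1 - 1/2) + b * (1 - (1/2 + l))) = (a + b) ^+ 2 / 4 - b ^+ 2 * l ^+ 2.
  by field.
have hl2 : l ^+ 2 <= 1/16.
  have : l * l <= 1/4 * (1/4) by apply: ler_pM; lra.
  by rewrite expr2; lra.
have hM : (a + b) ^+ 2 / 4 - b ^+ 2 / 16 <= (a + b) ^+ 2 / 4 - b ^+ 2 * l ^+ 2.
  have : b ^+ 2 * l ^+ 2 <= b ^+ 2 * (1/16) by rewrite ler_wpM2l // sqr_ge0.
  lra.
have hc : 0 <= 16 * l ^+ 2 / 3 * (a + b).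
  by apply: mulr_ge0; [apply: divr_ge0; [apply: mulr_ge0; [lra| apply: sqr_ge0]| lra] | lra].
have -> : 16 * l ^+ 2 / 3 * (a + b) * (a * (1/2) + b * (1/2 + l)) * (a * (1 - 1/2) + b * (1 - (1/2 + l))) = 16 * l ^+ 2 / 3 * (a + b) * ((a + b) ^+ 2 / 4 - b ^+ 2 * l ^+ 2) by rewrite -eM; ring.
apply: le_trans (ler_wpM2l hc hM).
have hp : 0 <= 4 * a ^+ 3 + 12 * a ^+ 2 * b - a * b ^+ 2 + 3 * b ^+ 3.
  have h1 : 0 <= 12 * a ^+ 2 - a * b + 3 * b ^+ 2.
    have : 0 <= 12 * (a - b / 24) ^+ 2 + (3 - 1/48) * b ^+ 2.
      by apply: addr_ge0; apply: mulr_ge0; rewrite ?sqr_ge0 //; lra.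
    have -> : 12 * (a - b / 24) ^+ 2 + (3 - 1/48) * b ^+ 2 = 12 * a ^+ 2 - a * b + 3 * b ^+ 2 by field.
    by [].
  have : 0 <= 4 * a ^+ 3 + b * (12 * a ^+ 2 - a * b + 3 * b ^+ 2).
    apply: addr_ge0; apply: mulr_ge0.
    - lra.
    - apply: exprn_ge0; lra.
    - lra.
    - exact: h1.
  have -> : 4 * a ^+ 3 + b * (12 * a ^+ 2 - a * b + 3 * b ^+ 2) = 4 * a ^+ 3 + 12 * a ^+ 2 * b - a * b ^+ 2 + 3 * b ^+ 3 by ring.
  by [].
have : 0 <= l ^+ 2 * (4 * a ^+ 3 + 12 * a ^+ 2 * b - a * b ^+ 2 + 3 * b ^+ 3) / 3.
  by apply: divr_ge0; [apply: mulr_ge0; [apply: sqr_ge0| lra] | lra].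
have -> : l ^+ 2 * (4 * a ^+ 3 + 12 * a ^+ 2 * b - a * b ^+ 2 + 3 * b ^+ 3) / 3 =
  16 * l ^+ 2 / 3 * (a + b) * ((a + b) ^+ 2 / 4 - b ^+ 2 / 16) - 4 * a * b ^+ 2 * (1 / 2 - (1 / 2 + l)) ^+ 2 by field.
lra.
Qed.

Lemma col2_poly (R : realFieldType) (a b dl e : R) : 0 < a -> 0 < b -> 0 < dl -> dl <= 1/4 -> 0 < e -> e <= 1/4 ->
  4 * a * b ^+ 2 * (dl - (dl + e)) ^+ 2 <=
  (2 * e ^+ 2 / (dl + e)) * (a + b) * (a * dl + b * (dl + e)) * (a * (1 - dl) + b * (1 - (dl + e))).
Proof.
move=> ha hb hd hd4 he he4.
have hs : 0 < dl + e by lra.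
have X1 : b * (dl + e) <= a * dl + b * (dl + e) by have := mulr_gt0 ha hd; lra.
have X2 : (a + b) / 2 <= a * (1 - dl) + b * (1 - (dl + e)).
  have : 0 <= a * (1/2 - dl) by apply: mulr_ge0; lra.
  have : 0 <= b * (1/2 - (dl + e)) by apply: mulr_ge0; lra.
  lra.
have c1 : 0 <= 2 * e ^+ 2 / (dl + e) * (a + b).
  apply: mulr_ge0; last lra; apply: divr_ge0; last lra; apply: mulr_ge0; [lra | apply: sqr_ge0].
have step : 2 * e ^+ 2 / (dl + e) * (a + b) * (b * (dl + e)) * ((a + b) / 2) <=
  2 * e ^+ 2 / (dl + e) * (a + b) * (a * dl + b * (dl + e)) * (a * (1 - dl) + b * (1 - (dl + e))).
  apply: ler_pM => //.
  - by apply: mulr_ge0 => //; apply: mulr_ge0; lra.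
  - lra.
  - by rewrite ler_wpM2l.
apply: le_trans step.
have -> : 2 * e ^+ 2 / (dl + e) * (a + b) * (b * (dl + e)) * ((a + b) / 2) = e ^+ 2 * b * (a + b) ^+ 2.
  by field; rewrite gt_eqF.
have : 0 <= e ^+ 2 * b * (a - b) ^+ 2 by apply: mulr_ge0; [apply: mulr_ge0; [apply: sqr_ge0 | lra] | apply: sqr_ge0].
have -> : e ^+ 2 * b * (a - b) ^+ 2 = e ^+ 2 * b * (a + b) ^+ 2 - 4 * a * b ^+ 2 * (dl - (dl + e)) ^+ 2 by ring.
lra.
Qed.
Arguments pp {R Q}. Arguments pr {R Q}. Arguments stp {R Q}. Arguments Lv {R Q}. Arguments DD {R Q}. Arguments cp {R Q}.

Lemma lin_bound (R : realFieldType) (I : finType) (A B Gv : I -> R) :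
  (forall i, 2 * (B i - A i) <= 3 * Gv i + (A i + B i) / 3) ->
  2 * (\sum_i B i - \sum_i A i) <= 3 * \sum_i Gv i + (\sum_i A i + \sum_i B i) / 3.
Proof.
move=> hi.
have h := ler_sum _ (fun i (_ : true) => hi i).
have e1 : \sum_i 2 * (B i - A i) = 2 * (\sum_i B i - \sum_i A i).
  by rewrite -sumrB mulr_sumr.
have e2 : \sum_i (3 * Gv i + (A i + B i) / 3) = 3 * \sum_i Gv i + (\sum_i A i + \sum_i B i) / 3.
  rewrite big_split /= -mulr_sumr; congr (_ + _).
  by rewrite -mulr_suml big_split.
by rewrite -e1 -e2.
Qed.

Lemma sum_dd (R : realFieldType) (Q : nat) (d1 d2 : R) (h : seq (step Q)) :
  \sum_(s <- h) (if s.1.2 then d2 else d1) = d1 * (N1 h)%:R + d2 * (N2 h)%:R.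
Proof.
elim: h => [|s h IH]; first by rewrite big_nil /N1 /N2 /= !mulr0 addr0.
rewrite big_cons IH /N1 /N2 /=; case: (s.1.2) => /=; rewrite !natrD /=; ring.
Qed.

Theorem lemma7 (R : realFieldType) (Q H : nat) (delta lambda eps : R)
    (act : seq (step Q) -> option (coin Q) -> R)
    (pred : seq (step Q) -> 'I_Q -> R) :
  (12 <= Q)%N ->
  0 < delta <= 1 / 4 -> 0 < lambda <= 1 / 4 -> 0 < eps <= 1 / 4 ->
  is_algorithm act pred H ->
  (forall (j : 'I_Q) (h : seq (step Q)),
      0 < stop_prob delta lambda eps act j h ->
      (N1 h)%:R <= Q%:R / (4 * C1 * lambda ^+ 2) /\
      (N2 h)%:R <= Q%:R * (delta + eps) / (4 * C2 * eps ^+ 2)) ->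
  exists J : {set 'I_Q},
    (Q%:R / 6 : R) <= #|J|%:R /\
    forall j : 'I_Q, j \in J ->
      prob_output delta lambda eps act pred H j j <= 1 / 2.
Proof.
move=> hQ /andP[d0 d4] /andP[l0 l4] /andP[e0 e4] [act_ge0 act_sum act_stop pred_ge0 pred_sum] hN.
pose q0 : coin Q -> R := fun c => if c.2 then delta else 1/2.
pose qj := fun (j : 'I_Q) (c : coin Q) => coin_heads delta lambda eps j c.
have q001 : forall c, 0 <= q0 c <= 1.
  by move=> c; rewrite /q0; case: (c.2); apply/andP; split; lra.
have qj01 : forall j c, 0 < qj j c < 1.
  by move=> j c; rewrite /qj /coin_heads; case: (c.2); case: (c.1 == j); apply/andP; split; lra.
have qj01w : forall j c, 0 <= qj j c <= 1.
  by move=> j c; have /andP[h1 h2] := qj01 j c; apply/andP; split; lra.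
have path_eq : forall j pre h, path_prob_from delta lambda eps act j pre h = pp act (qj j) pre h.
  by move=> j pre h; elim: h pre => //= s h IH pre; rewrite IH.
have stop_eq : forall j h, stop_prob delta lambda eps act j h = stp act (qj j) h.
  by move=> j h; rewrite /stop_prob /path_prob path_eq.
pose d1 := 16 * lambda ^+ 2 / 3.
pose d2 := 2 * eps ^+ 2 / (delta + eps).
pose dd := fun c : coin Q => if c.2 then d2 else d1.
pose dj := fun (j : 'I_Q) (c : coin Q) => if c.1 == j then dd c else 0.
have d1_ge0 : 0 <= d1 by rewrite /d1; apply: divr_ge0; [apply: mulr_ge0; [lra | apply: sqr_ge0] | lra].
have d2_ge0 : 0 <= d2 by rewrite /d2; apply: divr_ge0; [apply: mulr_ge0; [lra | apply: sqr_ge0] | lra].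
have keyj : forall j c a b, 0 <= a -> 0 <= b ->
   gg (a * q0 c) (b * qj j c) + gg (a * (1 - q0 c)) (b * (1 - qj j c)) <= gg a b + a * dj j c.
  move=> j c a b ha hb; rewrite /dj /qj /coin_heads /q0 /dd.
  case: (c.1 == j); case: (c.2).
  - apply: gg_key => //; first (by apply/andP; split; lra); first (by apply/andP; split; lra).
    by move=> ha' hb'; apply: col2_poly.
  - apply: gg_key => //; first (by apply/andP; split; lra); first (by apply/andP; split; lra).
    by move=> ha' hb'; apply: col1_poly.
  - have hv : forall v, 0 <= v -> gg (a * v) (b * v) = v * gg a b.
      by move=> v hv; rewrite [a * v]mulrC [b * v]mulrC gg_hom.
    rewrite !hv ?mulr0 ?addr0; [|lra|lra]. 
    have -> : delta * gg a b + (1 - delta) * gg a b = gg a b by ring.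
    by [].
  - have hv : forall v, 0 <= v -> gg (a * v) (b * v) = v * gg a b.
      by move=> v hv; rewrite [a * v]mulrC [b * v]mulrC gg_hom.
    rewrite !hv ?mulr0 ?addr0; [|lra|lra].
    have -> : 1 / 2 * gg a b + (1 - 1 / 2) * gg a b = gg a b by ring.
    by [].

pose x := fun j : 'I_Q => \sum_(n < H.+1) Lv n (fun h => stp act q0 h * pred h j).
pose G := fun j : 'I_Q => \sum_(n < H.+1) Lv n (fun h => gg (stp act q0 h) (stp act (qj j) h)).
have y_eq : forall j, prob_output delta lambda eps act pred H j j =
    \sum_(n < H.+1) Lv n (fun h => stp act (qj j) h * pred h j).
  move=> j; rewrite /prob_output; apply: eq_bigr => n _; apply: eq_bigr => t _.
  by rewrite stop_eq.
have pred01 : forall h k, 0 <= pred h k <= 1.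
  move=> h k; apply/andP; split => //.
  by rewrite -(pred_sum h) (bigD1 k) //= lerDl sumr_ge0.
have tv : forall j, 2 * (prob_output delta lambda eps act pred H j j - x j)
    <= 3 * G j + (x j + prob_output delta lambda eps act pred H j j) / 3.
  move=> j; rewrite y_eq /x /G; apply: lin_bound => n; rewrite /Lv; apply: lin_bound => t.
  have ha : 0 <= stp act q0 t by apply: stp_ge0.
  have hb : 0 <= stp act (qj j) t by apply: stp_ge0.
  have := tv_bound _ _ _ _ ha hb (pred01 t j).
  have -> : 2 * ((stp act (qj j) t - stp act q0 t) * pred t j) =
     2 * (stp act (qj j) t * pred t j - stp act q0 t * pred t j) by ring.
  have -> : (stp act q0 t + stp act (qj j) t) * pred t j / 3 =
     (stp act q0 t * pred t j + stp act (qj j) t * pred t j) / 3 by ring.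
  by [].

have Lv_ge0 : forall (n : nat) (F : seq (step Q) -> R), (forall h, 0 <= F h) -> 0 <= Lv n F.
  by move=> n F hF; rewrite /Lv; apply: sumr_ge0 => t _; apply: hF.
have G_le : forall j, G j <= \sum_(m < H.+1) Lv m (fun h => pr act q0 h * \sum_(c : coin Q) (act h (Some c) * dj j c)).
  move=> j; have := pot1 _ _ act act_ge0 act_sum q0 (qj j) (dj j) q001 (qj01w j) (keyj j) H.+1.
  have : 0 <= Lv H.+1 (fun h => gg (pr act q0 h) (pr act (qj j) h)).
    by apply: Lv_ge0 => h; apply: gg_ge0; apply: pr_ge0.
  rewrite /G; lra.
have exch : \sum_j \sum_(m < H.+1) Lv m (fun h => pr act q0 h * \sum_(c : coin Q) (act h (Some c) * dj j c))
   = \sum_(m < H.+1) Lv m (fun h => pr act q0 h * \sum_(c : coin Q) (act h (Some c) * dd c)).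
  rewrite exchange_big; apply: eq_bigr => m _; rewrite /Lv exchange_big; apply: eq_bigr => t _.
  rewrite -mulr_sumr; congr (_ * _); rewrite exchange_big; apply: eq_bigr => c _.
  rewrite -mulr_sumr; congr (_ * _); rewrite /dj -big_mkcond /=.
  by rewrite (big_pred1 c.1) // => i; rewrite /= eq_sym.
have stop_sum : \sum_(m < H.+1) Lv m (fun h => stp act q0 h) = 1.
  have := pot2 _ _ act act_sum q0 (fun _ => 0) 1 H.+1.
  rewrite (Lv_end _ _ _ _ act_ge0 act_sum act_stop) /= addr0.
  have z : \sum_(m < H.+1) Lv m (fun h => pr act q0 h * \sum_(c : coin Q) (act h (Some c) * 0)) = 0.
    apply: big1 => m _; apply: big1 => t _; rewrite big1 ?mulr0 // => c _; by rewrite mulr0.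
  rewrite z add0r => ->.
  apply: eq_bigr => m _; apply: eq_bigr => t _.
  by rewrite /DD big1 ?addr0 ?mulr1.
pose j0 : 'I_Q := Ordinal (leq_trans (isT : (0 < 12)%N) hQ).
pose K := Q%:R / 30 + Q%:R / 128 : R.
have sumG : \sum_j G j <= K.
  apply: le_trans (ler_sum _ (fun j _ => G_le j)) _.
  rewrite exch.
  have := pot2 _ _ act act_sum q0 dd 0 H.+1.
  rewrite (Lv_end _ _ _ _ act_ge0 act_sum act_stop) !addr0 => ->.
  apply: le_trans (_ : \sum_(m < H.+1) Lv m (fun h => stp act q0 h * K) <= _).
    apply: ler_sum => m _; rewrite /Lv; apply: ler_sum => t _.
    have hs : 0 <= stp act q0 t by apply: stp_ge0.
    have [->|ne] := eqVneq (stp act q0 t) 0; first by rewrite !mul0r.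
    have pos : 0 < stp act q0 t by rewrite lt_def ne.
    rewrite ler_wpM2l //.
    have hpr0 : 0 <= pr act q0 t by apply: pr_ge0.
    have hact : 0 <= act t None by apply: act_ge0.
    have ppos : 0 < pr act q0 t.
      rewrite lt_def hpr0 andbT; apply/eqP => e; move: pos; rewrite /stp e mul0r; lra.
    have apos : 0 < act t None.
      rewrite lt_def hact andbT; apply/eqP => e; move: pos; rewrite /stp e mulr0; lra.
    have ppos' := pp_pos _ _ act act_ge0 q0 (qj j0) q001 (qj01 j0) [::] t ppos.
    have spos : 0 < stop_prob delta lambda eps act j0 t.
      by rewrite stop_eq /stp mulr_gt0.
    have [hN1 hN2] := hN j0 t spos.
    rewrite /DD add0r /dd (sum_dd _ _ d1 d2).
    apply: le_trans (lerD (ler_wpM2l d1_ge0 hN1) (ler_wpM2l d2_ge0 hN2)) _.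
    rewrite /d1 /d2 /K /C1 /C2.
    have -> : 16 * lambda ^+ 2 / 3 * (Q%:R / (4 * 40 * lambda ^+ 2)) = Q%:R / 30.
      by field; rewrite gt_eqF.
    have -> : 2 * eps ^+ 2 / (delta + eps) * (Q%:R * (delta + eps) / (4 * 64 * eps ^+ 2)) = Q%:R / 128.
      field; rewrite !gt_eqF // addr_gt0 //.
    by [].
  have -> : \sum_(m < H.+1) Lv m (fun h => stp act q0 h * K) = (\sum_(m < H.+1) Lv m (fun h => stp act q0 h)) * K.
    by rewrite mulr_suml; apply: eq_bigr => m _; rewrite /Lv mulr_suml.
  by rewrite stop_sum mul1r.
have sumx : \sum_j x j = 1.
  rewrite /x exchange_big /= -[RHS]stop_sum; apply: eq_bigr => m _.
  rewrite /Lv exchange_big; apply: eq_bigr => t _.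
  by rewrite -mulr_sumr pred_sum mulr1.

have x_ge0 : forall j, 0 <= x j.
  move=> j; apply: sumr_ge0 => m _; apply: Lv_ge0 => h.
  by apply: mulr_ge0; [apply: stp_ge0 | apply: pred_ge0].
have G_ge0 : forall j, 0 <= G j.
  move=> j; apply: sumr_ge0 => m _; apply: Lv_ge0 => h.
  by apply: gg_ge0; apply: stp_ge0.
pose B1 := [set j | 1/4 < x j].
pose B2 := [set j | 1/12 < G j].
exists (~: (B1 :|: B2)); split; last first.
  move=> j; rewrite in_setC in_setU !inE negb_or => /andP[h1 h2].
  rewrite -leNgt in h1; rewrite -leNgt in h2.
  have := tv j; lra.
have cB1 : #|B1|%:R / 4 <= (1 : R).
  apply: le_trans (_ : \sum_(j in B1) x j <= _).
    have -> : #|B1|%:R / 4 = \sum_(j in B1) (1/4 : R).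
      by rewrite sumr_const -[RHS]mulr_natr; ring.
    by apply: ler_sum => j; rewrite inE => /ltW.
  rewrite -sumx big_mkcond /=; apply: ler_sum => j _.
  by case: ifP => // _; apply: x_ge0.
have cB2 : #|B2|%:R / 12 <= K.
  apply: le_trans sumG.
  apply: le_trans (_ : \sum_(j in B2) G j <= _).
    have -> : #|B2|%:R / 12 = \sum_(j in B2) (1/12 : R) by rewrite sumr_const -[RHS]mulr_natr mulrC div1r.
    by apply: ler_sum => j; rewrite inE => /ltW.
  rewrite big_mkcond /=; apply: ler_sum => j _.
  by case: ifP => // _; apply: G_ge0.
have cU : (#|B1 :|: B2| <= #|B1| + #|B2|)%N by rewrite cardsU leq_subr.
have cC : (#|B1 :|: B2| + #|~: (B1 :|: B2)| = Q)%N by rewrite cardsC card_ord.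
have cCR : (#|B1 :|: B2|%:R + #|~: (B1 :|: B2)|%:R = Q%:R :> R) by rewrite -natrD cC.
have cUR : (#|B1 :|: B2|%:R <= #|B1|%:R + #|B2|%:R :> R) by rewrite -natrD ler_nat.
have hQR : (12 : R) <= Q%:R by rewrite ler_nat.
rewrite /K in cB2.
lra.
Qed.
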